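(* Let $q\in\mathbb{C}\setminus\{0,1\}$. The left diagonal formal $q$-complex $0\to\mathbb{C}[[x_1,x_2]][[y]]\xrightarrow{d_y^0}\mathbb{C}[[x_1,x_2]][[y]]^{\oplus2}\xrightarrow{d_y^1}\mathbb{C}[[x_1,x_2]][[y]]\xrightarrow{\pi_y}\mathbb{C}[[x]]\to0$ and the right diagonal formal $q$-complex $0\to[[x]]\mathbb{C}[[y_1,y_2]]\xrightarrow{d_x^0}([[x]]\mathbb{C}[[y_1,y_2]])^{\oplus2}\xrightarrow{d_x^1}[[x]]\mathbb{C}[[y_1,y_2]]\xrightarrow{\pi_x}\mathbb{C}[[y]]\to0$ are exact.
   Context: $\mathbb{C}[[x_1,x_2]][[y]]$ is the Fréchet space of formal series $f=\sum_{n\ge0}f_n(x_1,x_2)y^n$ with $f_n\in\mathbb{C}[[x_1,x_2]]$ (product topology). Operators: $N_yf=\sum_{n\ge1}f_{n-1}y^n$, $D_{y,q}f=\sum_nq^nf_ny^n$, and $x_i$ acts by multiplication on the coefficients. $d_y^0f=(N_yf,\ (x_2-qx_1D_{y,q})f)$, $d_y^1(f,g)=(x_2-x_1D_{y,q})f-N_yg$, $\pi_y(\sum_nh_ny^n)=h_0(x,x)$. Symmetrically $[[x]]\mathbb{C}[[y_1,y_2]]$ consists of $f=\sum_{n\ge0}x^nf_n(y_1,y_2)$, with $N_xf=\sum_{n\ge1}x^nf_{n-1}$, $D_{x,q}f=\sum_nx^nq^nf_n$, $y_i$ acting by multiplication on coefficients; $d_x^0f=((y_1-qy_2D_{x,q})f,\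 N_xf)$, $d_x^1(f,g)=N_xf+(y_2D_{x,q}-y_1)g$, $\pi_x(\sum_nx^nh_n)=h_0(y,y)$. *)

(* Defs.v *)
From mathcomp Require Import all_boot all_algebra.
From mathcomp Require Import Rstruct.
From mathcomp Require Export complex.
Set Implicit Arguments. Unset Strict Implicit. Unset Printing Implicit Defensive.
Import GRing.Theory.
Local Open Scope ring_scope.

Definition C : numClosedFieldType := Rdefinitions.R[i].

Section FormalSeries.
Variable K : fieldType.

(* K[[x]] : coefficient sequences, s k = coefficient of x^k *)
Definition ser1 := nat -> K.
(* K[[x1,x2]] : g i j = coefficient of x1^i x2^j *)
Definition ser2 := nat -> nat -> K.
(* K[[x1,x2]][[y]] (resp. [[x]]K[[y1,y2]]) : f n = n-th coefficient series f_n *)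
Definition ser3 := nat -> ser2.

Definition zero1 : ser1 := fun _ => 0.
Definition zero2 : ser2 := fun _ _ => 0.
Definition zero3 : ser3 := fun _ => zero2.

Definition add3 (f g : ser3) : ser3 := fun n i j => f n i j + g n i j.
Definition sub3 (f g : ser3) : ser3 := fun n i j => f n i j - g n i j.
Definition scale3 (c : K) (f : ser3) : ser3 := fun n i j => c * f n i j.

Definition mulv1 (g : ser2) : ser2 :=
  fun i j => if i is i'.+1 then g i' j else 0.
Definition mulv2 (g : ser2) : ser2 :=
  fun i j => if j is j'.+1 then g i j' else 0.

Definition Mul1 (f : ser3) : ser3 := fun n => mulv1 (f n).
Definition Mul2 (f : ser3) : ser3 := fun n => mulv2 (f n).

Definition Nop (f : ser3) : ser3 := fun n => if n is n'.+1 then f n' else zero2.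
Definition Dop (q : K) (f : ser3) : ser3 := fun n i j => q ^+ n * f n i j.

(* diagonal evaluation h_0(z,z) of the constant coefficient h_0 *)
Definition diag0 (h : ser3) : ser1 :=
  fun k => \sum_(i < k.+1) h 0%N i (k - i)%N.

(* ---- left diagonal complex on K[[x1,x2]][[y]]  (x_1 = var 1, x_2 = var 2) *)
Definition Ny := Nop.
Definition Dyq := Dop.
Definition dy0 (q : K) (f : ser3) : ser3 * ser3 :=
  (Ny f, sub3 (Mul2 f) (scale3 q (Mul1 (Dyq q f)))).
Definition dy1 (q : K) (fg : ser3 * ser3) : ser3 :=
  sub3 (sub3 (Mul2 fg.1) (Mul1 (Dyq q fg.1))) (Ny fg.2).
Definition piy (h : ser3) : ser1 := diag0 h.

(* ---- right diagonal complex on [[x]]K[[y1,y2]]  (y_1 = var 1, y_2 = var 2) *)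
Definition Nx := Nop.
Definition Dxq := Dop.
Definition dx0 (q : K) (f : ser3) : ser3 * ser3 :=
  (sub3 (Mul1 f) (scale3 q (Mul2 (Dxq q f))), Nx f).
Definition dx1 (q : K) (fg : ser3 * ser3) : ser3 :=
  add3 (Nx fg.1) (sub3 (Mul2 (Dxq q fg.2)) (Mul1 fg.2)).
Definition pix (h : ser3) : ser1 := diag0 h.

End FormalSeries.

Definition exact_4term {A B E F : Type} (zA : A) (zB : B) (zE : E) (zF : F)
  (d0 : A -> B) (d1 : B -> E) (p : E -> F) : Prop :=
  [/\ (forall a, d0 a = zB -> a = zA),
      (forall b, d1 b = zE <-> exists a, d0 a = b),
      (forall e, p e = zF <-> exists b, d1 b = e)
    & (forall u, exists e, p e = u)].

(* Main.v *)
Require Import Defs.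
From mathcomp Require Import all_boot all_algebra.
From mathcomp Require Import ring lra zify.
From mathcomp Require Import Rstruct complex.
From Stdlib Require Import FunctionalExtensionality.
Set Implicit Arguments. Unset Strict Implicit.
Import GRing.Theory.
Local Open Scope ring_scope.

Section Aux.
Variable K : fieldType.

Definition Lop (h : ser2 K) : ser2 K := fun i j => mulv2 h i j - mulv1 h i j.

Lemma ext1 (f g : ser1 K) : (forall k, f k = g k) -> f = g.
Proof. move=> H; apply: functional_extensionality => k; exact: H. Qed.
Lemma ext2 (f g : ser2 K) : (forall i j, f i j = g i j) -> f = g.
Proof. move=> H; do 2 (apply: functional_extensionality => ?); exact: H. Qed.
Lemma ext3 (f g : ser3 K) : (forall n i j, f n i j = g n i j) -> f = g.
Proof. move=> H; do 3 (apply: functional_extensionality => ?); exact: H. Qed.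

Lemma LopA (h : ser2 K) : (forall i j, Lop h i j = 0) -> forall i j, h i j = 0.
Proof.
move=> H; elim=> [|i IH] j.
  by have := H 0%N j.+1; rewrite /Lop /mulv1 /mulv2 subr0.
have := H i.+1 j.+1; rewrite /Lop /mulv1 /mulv2 IH subr0 //.
Qed.

Lemma LopB (h : ser2 K) k : \sum_(i < k.+1) Lop h i (k - i)%N = 0.
Proof.
rewrite /Lop sumrB; case: k => [|k].
  by rewrite !big_ord1 /mulv1 /mulv2 /= subrr.
rewrite [X in X - _]big_ord_recr [X in _ - X]big_ord_recl /= subnn /mulv2 /mulv1 addr0 add0r.
idtac.
apply/eqP; rewrite subr_eq0; apply/eqP; apply: eq_bigr => i _ /=.
by rewrite subSS subSn // -ltnS.
Qed.

Definition Lsol (e : ser2 K) : ser2 K :=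
  fun i j => \sum_(t < i.+1) e t (i + j + 1 - t)%N.

Lemma LopC (e : ser2 K) : (forall k, \sum_(i < k.+1) e i (k - i)%N = 0) ->
  forall i j, Lop (Lsol e) i j = e i j.
Proof.
move=> H i j; rewrite /Lop /mulv1 /mulv2 /Lsol.
case: j => [|j]; case: i => [|i].
- have := H 0%N; rewrite big_ord1 /= subn0 => ->; by rewrite subrr.
- have := H i.+1; rewrite big_ord_recr /= subnn => /eqP.
  rewrite addr_eq0 => /eqP E.
  rewrite sub0r -[e _ _]opprK -E; congr (- _).
  by apply: eq_bigr => t _; rewrite addn0 addn1.
- by rewrite big_ord1 subr0 subn0 add0n addn1.
- rewrite big_ord_recr /= addrAC.
  have -> : (\sum_(i0 < i.+1) e i0 (i.+1 + j + 1 - i0)%N) =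
            \sum_(i0 < i.+1) e i0 (i + j.+1 + 1 - i0)%N.
    by apply: eq_bigr => t _; rewrite addSnnS.
  rewrite subrr add0r; congr (e _ _); lia.
Qed.

End Aux.

Lemma from0 (x y : C) : x - y = 0 -> y = x.
Proof. by move/eqP; rewrite subr_eq0 => /eqP. Qed.
Lemma from0' (x y : C) : x + y = 0 -> x = - y.
Proof. by move/eqP; rewrite addr_eq0 => /eqP. Qed.


Theorem lemma5p1 (q : C) (hq0 : q != 0) (hq1 : q != 1) :
  exact_4term (@zero3 C) (@zero3 C, @zero3 C) (@zero3 C) (@zero1 C)
    (dy0 q) (@dy1 C q) (@piy C)
  /\
  exact_4term (@zero3 C) (@zero3 C, @zero3 C) (@zero3 C) (@zero1 C)
    (dx0 q) (@dx1 C q) (@pix C).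
Proof.
split; split.
- move=> a [H _]; apply: ext3 => n i j.
  by have := congr1 (fun f => f n.+1 i j) H.
- move=> [f g]; split.
  + move=> H.
    have H' n i j := congr1 (fun f => f n i j) H.
    have f0 : forall i j, f 0%N i j = 0.
      apply: LopA => i j; have := H' 0%N i j.
      rewrite /dy1 /sub3 /Mul1 /Mul2 /Ny /Nop /Dyq /Dop /zero3 /zero2 /=.
      by rewrite /Lop /mulv1; case: i => [|i]; rewrite ?expr0 ?mul1r subr0.
    exists (fun n => f n.+1); congr pair.
      apply: ext3 => -[|n] i j //=; by rewrite f0.
    apply: ext3 => n i j; have := H' n.+1 i j.
    rewrite /dy1 /sub3 /scale3 /Mul1 /Mul2 /Ny /Nop /Dyq /Dop /zero3 /zero2 /=.
    rewrite /mulv1 /mulv2 exprS; case: i => [|i]; case: j => [|j] /=;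
      move=> E; rewrite (from0 E); ring.
  + move=> [a <-]; apply: ext3 => n i j.
    rewrite /dy1 /dy0 /sub3 /scale3 /Mul1 /Mul2 /Ny /Nop /Dyq /Dop /zero3 /zero2 /=.
    rewrite /mulv1 /mulv2; case: n => [|n]; case: i => [|i]; case: j => [|j] /=;
      rewrite ?exprS; ring.
- move=> e; split.
  + move=> H.
    have H0 : forall k, \sum_(i < k.+1) e 0%N i (k - i)%N = 0.
      by move=> k; have := congr1 (fun f => f k) H.
    exists (fun n => if n is 0%N then Lsol (e 0%N) else @zero2 C,
            fun n i j => - e n.+1 i j).
    apply: ext3 => n i j.
    rewrite /dy1 /sub3 /Mul1 /Mul2 /Ny /Nop /Dyq /Dop /zero2 /=.
    case: n => [|n].
      rewrite -(LopC H0 i j) /Lop /mulv1 subr0; case: i => [|i] //; by rewrite expr0 mul1r.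
    rewrite /mulv1 /mulv2; case: i => [|i]; case: j => [|j] /=; ring.
  + move=> [[f g] <-]; apply: ext1 => k.
    rewrite /piy /diag0 /zero1; transitivity (\sum_(i < k.+1) Lop (f 0%N) i (k - i)%N); last exact: LopB.
    apply: eq_bigr => i _.
    rewrite /dy1 /sub3 /Mul1 /Mul2 /Ny /Nop /Dyq /Dop /zero2 /Lop /=.
    rewrite /mulv1 subr0; case: (nat_of_ord i) => [|i'] //; by rewrite expr0 mul1r.
- move=> u; exists (fun n i j => match n, i with 0%N, 0%N => u j | _, _ => 0 end).
  apply: ext1 => k; rewrite /piy /diag0 big_ord_recl /= subn0 big1 ?addr0 //.
- move=> a [_ H]; apply: ext3 => n i j.
  by have := congr1 (fun f => f n.+1 i j) H.
- move=> [f g]; split.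
  + move=> H.
    have H' n i j := congr1 (fun f => f n i j) H.
    have g0 : forall i j, g 0%N i j = 0.
      apply: LopA => i j; have := H' 0%N i j.
      rewrite /dx1 /add3 /sub3 /Mul1 /Mul2 /Nx /Nop /Dxq /Dop /zero3 /zero2 /=.
      by rewrite /Lop /mulv2; case: j => [|j]; rewrite ?expr0 ?mul1r add0r.
    exists (fun n => g n.+1); congr pair.
      apply: ext3 => n i j; have := H' n.+1 i j.
      rewrite /dx1 /add3 /sub3 /scale3 /Mul1 /Mul2 /Nx /Nop /Dxq /Dop /zero3 /zero2 /=.
      rewrite /mulv1 /mulv2 exprS; case: i => [|i]; case: j => [|j] /=;
        move=> E; rewrite (from0' E); ring.
    apply: ext3 => -[|n] i j //=; by rewrite g0.
  + move=> [a <-]; apply: ext3 => n i j.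
    rewrite /dx1 /dx0 /add3 /sub3 /scale3 /Mul1 /Mul2 /Nx /Nop /Dxq /Dop /zero3 /zero2 /=.
    rewrite /mulv1 /mulv2; case: n => [|n]; case: i => [|i]; case: j => [|j] /=;
      rewrite ?exprS; ring.
- move=> e; split.
  + move=> H.
    have H0 : forall k, \sum_(i < k.+1) e 0%N i (k - i)%N = 0.
      by move=> k; have := congr1 (fun f => f k) H.
    exists (fun n i j => e n.+1 i j,
            fun n => if n is 0%N then Lsol (e 0%N) else @zero2 C).
    apply: ext3 => n i j.
    rewrite /dx1 /add3 /sub3 /Mul1 /Mul2 /Nx /Nop /Dxq /Dop /zero2 /=.
    case: n => [|n].
      rewrite -(LopC H0 i j) /Lop /mulv2 add0r; case: j => [|j] //.
      by rewrite expr0 mul1r.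
    rewrite /mulv1 /mulv2; case: i => [|i]; case: j => [|j] /=; ring.
  + move=> [[f g] <-]; apply: ext1 => k.
    rewrite /pix /diag0 /zero1; transitivity (\sum_(i < k.+1) Lop (g 0%N) i (k - i)%N); last exact: LopB.
    apply: eq_bigr => i _.
    rewrite /dx1 /add3 /sub3 /Mul1 /Mul2 /Nx /Nop /Dxq /Dop /zero2 /Lop /=.
    rewrite add0r /mulv2; case: (k - i)%N => [|j] //.
    by rewrite expr0 mul1r.
- move=> u; exists (fun n i j => match n, i with 0%N, 0%N => u j | _, _ => 0 end).
  apply: ext1 => k; rewrite /pix /diag0 big_ord_recl /= subn0 big1 ?addr0 //.
Qed.
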